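(* Let $A=(a_{ij})\in M(m,\mathbb{C})$ and let $X_A$ be a complex algebra spanned by elements $\{x_{ij}:i,j=1,\ldots,m\}$ satisfying $x_{ij}x_{kl}=a_{jk}x_{il}$. If $X_A$ is semisimple and $\det A=0$, then the elements $\{x_{ij}:i,j=1,\ldots,m\}$ are linearly dependent. *)

(* Defs.v *)
(* The complex numbers are modelled as R[i] (mathcomp-real-closed
   complex.v) for R : realType (a complete archimedean ordered field, i.e. the reals). *)
From mathcomp Require Import all_boot all_algebra.
From mathcomp Require Import reals.
From mathcomp Require Export complex.
Set Implicit Arguments.
Unset Strict Implicit.
Unset Printing Implicit Defensive.
Import GRing.Theory Num.Theory.
Local Open Scope ring_scope.

Section AlgDefs.
Variables (K : fieldType) (V : lmodType K) (mul : V -> V -> V).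

Definition is_assoc_algebra : Prop :=
  [/\ forall a b c, mul a (b + c) = mul a b + mul a c,
      forall a b c, mul (a + b) c = mul a c + mul b c,
      forall (k : K) a b, mul (k *: a) b = k *: mul a b,
      forall (k : K) a b, mul a (k *: b) = k *: mul a b
    & forall a b c, mul a (mul b c) = mul (mul a b) c].

Definition is_ideal (I : V -> Prop) : Prop :=
  [/\ I 0,
      forall a b, I a -> I b -> I (a + b),
      forall (k : K) a, I a -> I (k *: a)
    & forall a b, I b -> I (mul a b) /\ I (mul b a)].

(* I is nilpotent: I^n = 0 for some n >= 1, i.e. every product of n+1 elements
   of I (equivalently, of n elements, up to reindexing) vanishes. *)
Definition is_nilpotent_set (I : V -> Prop) : Prop :=
  exists n : nat, forall (x : V) (s : seq V),
    I x -> (forall y, y \in s -> I y) -> size s = n -> foldl mul x s = 0.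

(* Semisimple (finite-dimensional setting): the algebra has no nonzero
   nilpotent two-sided ideal, i.e. its (Jacobson) radical is zero. *)
Definition semisimple_alg : Prop :=
  forall I : V -> Prop, is_ideal I -> is_nilpotent_set I ->
    forall v, I v -> v = 0.

End AlgDefs.

Definition spans_family (K : fieldType) (V : lmodType K) (m : nat)
    (x : 'I_m -> 'I_m -> V) : Prop :=
  forall v : V, exists c : 'I_m -> 'I_m -> K,
    v = \sum_(i < m) \sum_(j < m) c i j *: x i j.

Definition lin_dependent_family (K : fieldType) (V : lmodType K) (m : nat)
    (x : 'I_m -> 'I_m -> V) : Prop :=
  exists c : 'I_m -> 'I_m -> K,
    (exists i j, c i j != 0) /\ \sum_(i < m) \sum_(j < m) c i j *: x i j = 0.

(* Main.v *)
Require Import Defs.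
From mathcomp Require Import all_boot all_algebra.
From mathcomp Require Import reals.
From mathcomp Require Import complex.
Import GRing.Theory Num.Theory.
Local Open Scope ring_scope.
Local Open Scope complex_scope.

Theorem corollary33 (R : realType) (m : nat) (A : 'M[R[i]]_m)
    (V : lmodType R[i]) (mul : V -> V -> V) (x : 'I_m -> 'I_m -> V) :
  is_assoc_algebra mul ->
  spans_family x ->
  (forall i j k l, mul (x i j) (x k l) = A j k *: x i l) ->
  semisimple_alg mul ->
  \det A = 0 ->
  lin_dependent_family x.
Proof.
move=> [mD mDl mZl mZr mA] span hx ss /eqP /det0P [v vn0 vA].
have m0r a : mul a 0 = 0.
  by apply: (addrI (mul a 0)); rewrite -mD !addr0.
have m0l a : mul 0 a = 0.
  by apply: (addrI (mul 0 a)); rewrite -mDl !addr0.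
have [j0 vj0] : exists j0, v 0 j0 != 0.
  apply/existsP; apply: contraR vn0; rewrite negb_exists => /forallP H.
  by apply/eqP/matrixP => a b; rewrite ord1 mxE; apply/eqP; have := H b; rewrite negbK.
pose w := \sum_(j < m) v 0 j *: x j0 j.
have mwx k l : mul w (x k l) = 0.
  rewrite (big_morph (fun a => mul a (x k l)) (fun a b => mDl a b _) (m0l _)).
  under eq_bigr => j _ do rewrite mZl hx scalerA.
  rewrite -scaler_suml.
  have -> : \sum_(j < m) v 0 j * A j k = (v *m A) 0 k by rewrite mxE.
  by rewrite vA mxE scale0r.
have mw a : mul w a = 0.
  have [c ->] := span a.
  rewrite (big_morph (mul w) (mD w) (m0r w)) big1 // => k _.
  rewrite (big_morph (mul w) (mD w) (m0r w)) big1 // => l _.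
  by rewrite mZr mwx scaler0.
have w0 : w = 0.
  apply: (ss (fun u => forall a, mul u a = 0)) => //.
  - split.
    + by move=> a; rewrite m0l.
    + by move=> a b Ha Hb c; rewrite mDl Ha Hb addr0.
    + by move=> k a Ha c; rewrite mZl Ha scaler0.
    + move=> a b Hb; split=> c.
        by rewrite -mA Hb m0r.
      by rewrite -mA Hb.
  - exists 1%N => y s Hy Hs.
    by case: s Hs => [|z [|]] //= Hs _; apply: Hy.
exists (fun i j => if i == j0 then v 0 j else 0); split.
  by exists j0, j0; rewrite eqxx.
rewrite (bigD1 j0) //= [X in _ + X]big1 => [|i /negPf ->]; last first.
  by apply: big1 => j _; rewrite scale0r.
rewrite addr0 eqxx; move: w0; rewrite /w; exact: id.
Qed.
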